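(* If $G$ is a connected graph with girth at least $5$ and maximum degree $\Delta$, then $\chi_D(G)\le \Delta+2$.
   Context: A $k$-coloring of a graph $G$ is a map $\varphi:V(G)\to\{1,\dots,k\}$; it is proper if adjacent vertices get different colors. A coloring $\varphi$ is distinguishing if the only automorphism $f$ of $G$ with $\varphi(f(v))=\varphi(v)$ for all $v$ is the identity. $\chi_D(G)$ is the smallest number of colors in a proper distinguishing coloring of $G$. *)

(* Defs.v *)
From mathcomp Require Import all_boot all_fingroup.
Local Open Scope nat_scope.
Set Implicit Arguments. Unset Strict Implicit. Unset Printing Implicit Defensive.

Definition simple_graph (T : finType) (e : rel T) : Prop :=
  symmetric e /\ irreflexive e.

Definition connected (T : finType) (e : rel T) : Prop :=
  forall x y : T, connect e x y.

Definition deg (T : finType) (e : rel T) (v : T) : nat := #|[set w | e v w]|.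
Definition maxdeg (T : finType) (e : rel T) : nat := \max_(v : T) deg e v.

(* Acyclic graphs have infinite girth and satisfy this for all g. *)
Definition girth_ge (T : finType) (e : rel T) (g : nat) : Prop :=
  forall s : seq T, uniq s -> 3 <= size s -> path.cycle e s -> g <= size s.

Definition automorphism (T : finType) (e : rel T) (f : {perm T}) : Prop :=
  forall x y : T, e (f x) (f y) = e x y.

Definition proper_coloring (T : finType) (e : rel T) (k : nat) (phi : T -> 'I_k) : Prop :=
  forall x y : T, e x y -> phi x != phi y.

Definition distinguishing (T : finType) (e : rel T) (k : nat) (phi : T -> 'I_k) : Prop :=
  forall f : {perm T}, automorphism e f -> (forall v, phi (f v) = phi v) -> f = 1%g.

Definition chiD_le (T : finType) (e : rel T) (k : nat) : Prop :=
  exists phi : T -> 'I_k, proper_coloring e phi /\ distinguishing e phi.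

(* Main.v *)
Require Import Defs.
From mathcomp Require Import all_boot all_fingroup.
Set Implicit Arguments. Unset Strict Implicit. Unset Printing Implicit Defensive.

Lemma no_tri (T : finType) (e : rel T) a b c :
  simple_graph e -> girth_ge e 5 -> e a b -> e b c -> e c a -> False.
Proof.
move=> [sy ir] g hab hbc hca.
have nab : a != b by apply/eqP=> ab; move: hab; rewrite ab ir.
have nbc : b != c by apply/eqP=> bc; move: hbc; rewrite bc ir.
have nca : c != a by apply/eqP=> ca; move: hca; rewrite ca ir.
have := g [:: a; b; c]; rewrite /= !inE !negb_or nab nbc eq_sym nca /=.
by rewrite hab hbc hca => /(_ isT isT isT).
Qed.

Lemma no_sq (T : finType) (e : rel T) a b c d :
  simple_graph e -> girth_ge e 5 -> uniq [:: a; b; c; d] ->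
  e a b -> e b c -> e c d -> e d a -> False.
Proof.
move=> [sy ir] g hu hab hbc hcd hda.
have := g [:: a; b; c; d] hu isT; rewrite /= hab hbc hcd hda.
by move=> /(_ isT).
Qed.

Definition ppb (T : finType) (e : rel T) (rk : T -> nat) (u v : T) : bool :=
  [&& rk u < rk v, e u v & [forall y, (rk y < rk v) && e y v ==> (y == u)]].
Definition crb (T : finType) (e : rel T) (rk : T -> nat) (u v z : T) : bool :=
  [&& ppb e rk u v, e u z & [forall y, (rk y < rk v) && e y z ==> (y == u)]].

Lemma dist_from_rank (T : finType) (e : rel T) (r : T) (rk : T -> nat) k
  (phi : T -> 'I_k) :
  simple_graph e -> girth_ge e 5 -> injective rk ->
  (forall x, x != r -> exists y, rk y < rk x /\ e y x) ->
  (forall x, x != r -> phi x != phi r) ->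
  (forall w v u, rk v < rk w -> crb e rk u v w -> phi v != phi w) ->
  distinguishing e phi.
Proof.
move=> sg g inj hA hR hC f aut hf.
have [sy ir] := sg.
suff cl : forall m x, rk x < m -> f x = x.
  by apply/permP=> x; rewrite perm1; apply: (cl (rk x).+1).
elim=> [//|m IH] x; rewrite ltnS leq_eqVlt => /orP [/eqP hx|]; last exact: IH.
have fix1 : forall y, rk y < rk x -> f y = y by move=> y; rewrite hx; apply: IH.
case: (eqVneq x r) => [->|xr].
  apply/eqP; apply/negPn/negP => fr.
  by have := hR _ fr; rewrite hf eqxx.
apply/eqP; apply/negPn/negP => fx.
have hrk : rk x < rk (f x).
  case: (ltngtP (rk x) (rk (f x))) => // h.
    have := fix1 _ h => /perm_inj ffx.
    by move: fx; rewrite ffx eqxx.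
  by move: fx; rewrite -(inj _ _ h) eqxx.
have [u [ux eux]] := hA x xr.
have nb : forall y, rk y < rk x -> e y (f x) = e y x.
  by move=> y hy; rewrite -{1}(fix1 y hy) aut.
have un : forall y, rk y < rk x -> e y x -> y = u.
  move=> y hy eyx; apply/eqP/negPn/negP => yu.
  have xnu : x != u by apply/eqP=> xu; move: eux; rewrite xu ir.
  have xny : x != y by apply/eqP=> xy; move: eyx; rewrite xy ir.
  have fnu : f x != u.
    by apply/eqP=> h; move: xnu; rewrite -(fix1 u ux) in h; rewrite (perm_inj h) eqxx.
  have fny : f x != y.
    by apply/eqP=> h; move: xny; rewrite -(fix1 y hy) in h; rewrite (perm_inj h) eqxx.
  apply: (no_sq sg g (a:=u) (b:=x) (c:=y) (d:=f x)) => //.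
  - rewrite /= !inE !negb_or (eq_sym u x) xnu (eq_sym u y) yu (eq_sym u (f x)) fnu.
    by rewrite xny (eq_sym x (f x)) fx (eq_sym y (f x)) fny.
  - by rewrite sy.
  - by rewrite nb.
  - by rewrite sy nb.
have : crb e rk u x (f x).
  rewrite /crb /ppb ux eux nb //= eux /=.
  apply/andP; split; apply/forallP=> y; apply/implyP=> /andP [hy ey].
    by rewrite (un y hy ey).
  by rewrite nb // in ey; rewrite (un y hy ey).
by move/(hC _ _ _ hrk); rewrite hf eqxx.
Qed.

Record Basic (T : finType) (e : rel T) (r : T) (n : nat) (rk : T -> nat) k
   (phi : T -> 'I_k) : Prop := MkBasic {
 b_root : rk r < n;
 b_range : forall x, rk x < n \/ rk x = #|T|;
 b_card : #|[set x | rk x < n]| = n;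
 b_inj : forall x y, rk x < n -> rk x = rk y -> x = y;
 b_A : forall x, rk x < n -> x != r -> exists y, rk y < rk x /\ e y x;
 b_P : forall x y, rk x < n -> rk y < rk x -> e y x -> phi y != phi x;
 b_R : forall x, rk x < n -> x != r -> phi x != phi r;
 b_C : forall w v u, rk w < n -> rk v < rk w -> crb e rk u v w -> phi v != phi w }.

Definition ext (T : finType) (rk : T -> nat) (w : T) (n : nat) :=
  fun x => if x == w then n else rk x.

Lemma basic_le (T : finType) (e : rel T) r n rk k (phi : T -> 'I_k) :
  Basic e r n rk phi -> n <= #|T|.
Proof. by move=> b; rewrite -(b_card b) max_card. Qed.

Lemma basic_lt (T : finType) (e : rel T) r n rk k (phi : T -> 'I_k) w :
  Basic e r n rk phi -> rk w = #|T| -> n < #|T|.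
Proof.
move=> b hw; rewrite -(b_card b) -[X in _ < X](cardsC [set x | rk x < n]).
rewrite -[X in X < _]addn0 ltn_add2l card_gt0; apply/set0Pn; exists w.
by rewrite !inE hw -leqNgt (basic_le b).
Qed.

Lemma ext_lt (T : finType) (rk : T -> nat) w n y :
  n <= rk w -> (ext rk w n y < n) = (rk y < n).
Proof.
rewrite /ext; case: (eqVneq y w) => [->|//] h.
by rewrite ltnn ltnNge h.
Qed.



Lemma ext_cmp (T : finType) (rk : T -> nat) w n v y :
  n <= rk w -> rk v < n -> (ext rk w n y < ext rk w n v) = (rk y < rk v).
Proof.
move=> hw hv; have vw : v != w by apply/eqP=> vw; move: hv; rewrite vw ltnNge hw.
rewrite /ext (negbTE vw); case: (eqVneq y w) => [->|//].
apply/idP/idP=> h; first by move: (ltn_trans h hv); rewrite ltnn.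
by move: (leq_trans (ltn_trans h hv) hw); rewrite ltnn.
Qed.

Lemma ppb_ext (T : finType) (e : rel T) (rk : T -> nat) w n u v :
  n <= rk w -> rk v < n -> ppb e (ext rk w n) u v = ppb e rk u v.
Proof.
move=> hw hv; rewrite /ppb ext_cmp //; congr (_ && (_ && _)).
by apply: eq_forallb => y; rewrite ext_cmp.
Qed.

Lemma crb_ext (T : finType) (e : rel T) (rk : T -> nat) w n u v z :
  n <= rk w -> rk v < n -> crb e (ext rk w n) u v z = crb e rk u v z.
Proof.
move=> hw hv; rewrite /crb ppb_ext //; congr (_ && (_ && _)).
by apply: eq_forallb => y; rewrite ext_cmp.
Qed.

Definition forb (T : finType) (e : rel T) (r : T) (n : nat) (rk : T -> nat) k
  (phi : T -> 'I_k) (w : T) : {set 'I_k} :=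
  phi r |: [set phi y | y in [set y | (rk y < n) && e y w]]
  :|: [set phi v | v in [set v | (rk v < n) && [exists u, crb e rk u v w]]].

Lemma ext_basic (T : finType) (e : rel T) r n rk k (phi : T -> 'I_k) w c :
  Basic e r n rk phi -> rk w = #|T| ->
  (exists y, rk y < n /\ e y w) ->
  c \notin forb e r n rk phi w ->
  Basic e r n.+1 (ext rk w n) (fun x => if x == w then c else phi x).
Proof.
move=> b hwN [y0 [hy0 ey0]] hc.
have hnN := basic_lt b hwN.
have hw : n <= rk w by rewrite hwN ltnW.
have inw : forall x, rk x < n -> x != w.
  by move=> x hx; apply/eqP=> xw; move: hx; rewrite xw ltnNge hw.
have old : forall x, x != w -> ext rk w n x < n.+1 -> rk x < n.
  move=> x xw; rewrite /ext (negbTE xw) ltnS leq_eqVlt => /orP [/eqP hx|//].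
  by case: (b_range b x) => h; [move: h; rewrite hx ltnn | move: hnN; rewrite -h hx ltnn].
have extw : ext rk w n w = n by rewrite /ext eqxx.
have exto : forall x, x != w -> ext rk w n x = rk x by move=> x xw; rewrite /ext (negbTE xw).
have rw : r != w := inw _ (b_root b).
move: hc; rewrite /forb !inE !negb_or => /andP [/andP [cr cN] cC].
have cN' : forall y, rk y < n -> e y w -> phi y != c.
  move=> y hy ey; apply/eqP=> h; move: cN; rewrite -h.
  by move/imsetP; apply; exists y => //; rewrite inE hy ey.
have cC' : forall v u, rk v < n -> crb e rk u v w -> phi v != c.
  move=> v u hv hcr; apply/eqP=> h; move: cC; rewrite -h.
  move/imsetP; apply; exists v => //; rewrite inE hv /=.
  by apply/existsP; exists u.
split.
- by rewrite exto // ltnW // ltnS (b_root b).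
- move=> x; case: (eqVneq x w) => [->|xw]; first by left; rewrite extw.
  by rewrite exto //; case: (b_range b x) => h; [left; apply: ltnW | right].
- have -> : [set x | ext rk w n x < n.+1] = w |: [set x | rk x < n].
    apply/setP=> x; rewrite !inE; case: (eqVneq x w) => [->|xw] /=.
      by rewrite extw ltnSn.
    apply/idP/idP; first exact: old.
    by rewrite exto // => h; apply: ltnW.
  rewrite cardsU1 (b_card b) inE.
  by rewrite hwN ltnNge (basic_le b).
- move=> x y hx hxy.
  case: (eqVneq x w) => [xw|xw]; case: (eqVneq y w) => [yw|yw].
  + by rewrite xw yw.
  + move: hxy; rewrite xw extw exto // => hy.
    by case: (b_range b y) => h; [move: h; rewrite -hy ltnn | move: hnN; rewrite -h -hy ltnn].
  + move: hxy; rewrite yw extw exto // => hx'.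
    by move: (old x xw hx); rewrite hx' ltnn.
  + by move: hxy; rewrite !exto //; apply: (b_inj b); apply: old.
- move=> x hx xr; case: (eqVneq x w) => [->|xw].
    exists y0; split => //; by rewrite extw exto ?inw.
  have [y [hy ey]] := b_A b (old x xw hx) xr.
  by exists y; rewrite ext_cmp // (old x xw hx).
- move=> x y hx hyx eyx; case: (eqVneq x w) => [xw|xw].
    move: hyx; rewrite xw extw ext_lt // => hy.
    by rewrite /= (negbTE (inw y hy)); apply: cN' => //; rewrite -xw.
  have hx' := old x xw hx.
  move: hyx; rewrite ext_cmp // => hy.
  have hyn := ltn_trans hy hx'.
  by rewrite /= (negbTE (inw y hyn)); apply: (b_P b).
- move=> x hx xr; rewrite /= (negbTE rw); case: (eqVneq x w) => [_|xw].
    exact: cr.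
  exact: (b_R b (old x xw hx)).
- move=> x v u hx hvx hcr; case: (eqVneq x w) => [xw|xw].
    move: hvx hcr; rewrite xw extw ext_lt // => hv.
    rewrite crb_ext // => hcr.
    by rewrite /= (negbTE (inw v hv)); apply: cC' hcr.
  have hx' := old x xw hx.
  move: hvx; rewrite ext_cmp // => hv.
  have hvn := ltn_trans hv hx'.
  move: hcr; rewrite crb_ext // => hcr.
  by rewrite /= (negbTE (inw v hvn)); apply: (b_C b) hcr.
Qed.

Definition active (T : finType) (e : rel T) (n : nat) (rk : T -> nat) (u : T) :=
  rk u < n /\ (exists v, rk v < n /\ ppb e rk u v) /\ (exists z, rk z = #|T| /\ e u z).

Record Fancy (T : finType) (e : rel T) (n : nat) (rk : T -> nat) : Prop := MkFancy {
 f_I : forall z v u, rk z = #|T| -> rk v < n -> crb e rk u v z ->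
        forall y, rk y < n -> e y z -> y = u;
 f_K1 : forall u1 u2, active e n rk u1 -> active e n rk u2 -> u1 = u2;
 f_K2 : forall u z, active e n rk u -> rk z = #|T| -> e u z ->
        forall y, rk y < n -> e y z -> y = u }.

Lemma old_lt (T : finType) (rk : T -> nat) w n x :
  (forall x, rk x < n \/ rk x = #|T|) -> n < #|T| -> x != w ->
  ext rk w n x < n.+1 -> rk x < n.
Proof.
move=> hr hnN xw; rewrite /ext (negbTE xw) ltnS leq_eqVlt => /orP [/eqP hx|//].
by case: (hr x) => h; [move: h; rewrite hx ltnn | move: hnN; rewrite -h hx ltnn].
Qed.

Lemma extN (T : finType) (rk : T -> nat) w n x :
  n < #|T| -> ext rk w n x = #|T| -> x != w /\ rk x = #|T|.
Proof.
rewrite /ext; case: (eqVneq x w) => [_ h e1|//]; by move: h; rewrite e1 ltnn.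
Qed.

Lemma ppb_w (T : finType) (e : rel T) (rk : T -> nat) w n u :
  n <= rk w -> ppb e (ext rk w n) u w ->
  [/\ rk u < n, e u w & forall y, rk y < n -> e y w -> y = u].
Proof.
move=> hw /and3P [hu euw /forallP hf].
have ew : ext rk w n w = n by rewrite /ext eqxx.
move: hu; rewrite ew ext_lt // => hu; split => // y hy eyw.
by apply/eqP; move: (hf y); rewrite ew ext_lt // hy eyw.
Qed.

Lemma crb_w (T : finType) (e : rel T) (rk : T -> nat) w n u z :
  n <= rk w -> crb e (ext rk w n) u w z ->
  [/\ rk u < n, e u w, e u z & forall y, rk y < n -> e y z -> y = u].
Proof.
move=> hw /and3P [hp euz /forallP hf]; have [hu euw _] := ppb_w hw hp.
have ew : ext rk w n w = n by rewrite /ext eqxx.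
split => // y hy eyz.
by apply/eqP; move: (hf y); rewrite ew ext_lt // hy eyz.
Qed.

Lemma active_ext (T : finType) (e : rel T) r n rk k (phi : T -> 'I_k) w u :
  Basic e r n rk phi -> rk w = #|T| ->
  active e n.+1 (ext rk w n) u ->
  active e n rk u \/ [/\ rk u < n, e u w & forall y, rk y < n -> e y w -> y = u].
Proof.
move=> b hwN [hu [[v [hv pv]] [z [hz euz]]]].
have hnN := basic_lt b hwN.
have hw : n <= rk w by rewrite hwN ltnW.
have [zw hz'] := extN hnN hz.
case: (eqVneq v w) => [vw|vw].
  by right; move: pv; rewrite vw => pv; exact: ppb_w hw pv.
have hv' := old_lt (b_range b) hnN vw hv.
move: pv; rewrite ppb_ext // => pv.
left; split; last by split; [exists v | exists z].
by case/and3P: pv => h _ _; apply: ltn_trans h hv'.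
Qed.

Lemma fI_ext (T : finType) (e : rel T) r n rk k (phi : T -> 'I_k) w :
  simple_graph e -> girth_ge e 5 -> Basic e r n rk phi -> Fancy e n rk ->
  rk w = #|T| ->
  (forall u z, active e n rk u -> rk z = #|T| -> e u z -> e w z -> False) ->
  forall z v u, ext rk w n z = #|T| -> ext rk w n v < n.+1 ->
     crb e (ext rk w n) u v z ->
     forall y, ext rk w n y < n.+1 -> e y z -> y = u.
Proof.
move=> sg g b fa hwN Hw z v u hz hv hcr y hy eyz.
have [sy ir] := sg.
have hnN := basic_lt b hwN.
have hw : n <= rk w by rewrite hwN ltnW.
have [zw hz'] := extN hnN hz.
case: (eqVneq v w) => [vw|vw].
  move: hcr; rewrite vw => /(crb_w hw) [hu euw euz hall].
  case: (eqVneq y w) => [yw|yw]; last by apply: hall => //; apply: old_lt (b_range b) hnN yw hy.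
  by exfalso; apply: (no_tri sg g euw (_ : e w z)); [rewrite -yw | rewrite sy].
have hv' := old_lt (b_range b) hnN vw hv.
move: hcr; rewrite crb_ext // => hcr.
have hall := f_I fa hz' hv' hcr.
case: (eqVneq y w) => [yw|yw]; last by apply: hall => //; apply: old_lt (b_range b) hnN yw hy.
exfalso; case/and3P: hcr => pv euz _.
apply: (Hw u z) => //; last by rewrite -yw.
split; first by case/and3P: pv => h _ _; apply: ltn_trans h hv'.
by split; [exists v | exists z].
Qed.

Lemma fancy_np (T : finType) (e : rel T) r n rk k (phi : T -> 'I_k) w y1 y2 :
  simple_graph e -> girth_ge e 5 -> Basic e r n rk phi -> Fancy e n rk ->
  rk w = #|T| -> (forall u, ~ active e n rk u) ->
  y1 != y2 -> rk y1 < n -> rk y2 < n -> e y1 w -> e y2 w ->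
  Fancy e n.+1 (ext rk w n).
Proof.
move=> sg g b fa hwN na y12 h1 h2 e1 e2.
have noact : forall u, ~ active e n.+1 (ext rk w n) u.
  move=> u /(active_ext b hwN) [/na //|[_ _ hall]].
  by move: y12; rewrite (hall _ h1 e1) (hall _ h2 e2) eqxx.
split.
- apply: (fI_ext sg g b fa hwN) => u z /na //.
- by move=> u1 u2 /noact.
- by move=> u z /noact.
Qed.

Lemma fancy_p (T : finType) (e : rel T) r n rk k (phi : T -> 'I_k) w u0 :
  simple_graph e -> girth_ge e 5 -> Basic e r n rk phi -> Fancy e n rk ->
  rk w = #|T| -> rk u0 < n -> e u0 w ->
  (forall y, rk y < n -> e y w -> y = u0) ->
  (active e n rk u0 \/
    ((forall u, ~ active e n rk u) /\
     (forall z y1 y2, rk z = #|T| -> rk y1 < n -> rk y2 < n -> e y1 z -> e y2 z -> y1 = y2))) ->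
  Fancy e n.+1 (ext rk w n).
Proof.
move=> sg g b fa hwN hu0 eu0 hall hcase.
have [sy ir] := sg.
have hnN := basic_lt b hwN.
have hw : n <= rk w by rewrite hwN ltnW.
have isu0 : forall u, active e n.+1 (ext rk w n) u -> u = u0.
  move=> u /(active_ext b hwN) [au|[hu euw _]]; last exact: hall.
  case: hcase => [a0|[na _]]; [exact: (f_K1 fa au a0) | by case: (na u)].
split.
- apply: (fI_ext sg g b fa hwN) => u z au hz euz ewz.
  case: hcase => [a0|[na _]]; last by apply: (na u).
  have uu0 := f_K1 fa au a0; rewrite uu0 in euz.
  by apply: (no_tri sg g eu0 ewz); rewrite sy.
- by move=> u1 u2 /isu0 -> /isu0 ->.
- move=> u z /isu0 -> hz euz y hy eyz.
  have [zw hz'] := extN hnN hz.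
  case: (eqVneq y w) => [yw|yw].
    by exfalso; apply: (no_tri sg g eu0 (_ : e w z)); [rewrite -yw | rewrite sy].
  have hy' := old_lt (b_range b) hnN yw hy.
  case: hcase => [a0|[_ h2]]; first exact: (f_K2 fa a0 hz' euz hy' eyz).
  exact: (h2 z y u0).
Qed.

Lemma pick_color k (F : {set 'I_k}) : #|F| < k -> exists c, c \notin F.
Proof.
move=> h; have : 0 < #|~: F|.
  by rewrite -(ltn_add2l #|F|) addn0 cardsC card_ord.
by rewrite card_gt0 => /set0Pn [c]; rewrite inE => hc; exists c.
Qed.

Lemma deg_le (T : finType) (e : rel T) v : deg e v <= maxdeg e.
Proof. exact: (leq_bigmax (F := deg e) v). Qed.

Lemma step_np (T : finType) (e : rel T) r n rk (phi : T -> 'I_(maxdeg e + 2)) w y1 y2 :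
  simple_graph e -> girth_ge e 5 -> Basic e r n rk phi -> Fancy e n rk ->
  rk w = #|T| -> (forall u, ~ active e n rk u) ->
  y1 != y2 -> rk y1 < n -> rk y2 < n -> e y1 w -> e y2 w ->
  exists rk' (phi' : T -> 'I_(maxdeg e + 2)),
    Basic e r n.+1 rk' phi' /\ Fancy e n.+1 rk'.
Proof.
move=> sg g b fa hwN na y12 h1 h2 e1 e2.
have [sy ir] := sg.
have hnN := basic_lt b hwN.
have hw : n <= rk w by rewrite hwN ltnW.
have CS0 : [set v | (rk v < n) && [exists u, crb e rk u v w]] = set0.
  apply/setP=> v; rewrite !inE; apply/negbTE/negP => /andP [hv /existsP [u hcr]].
  have hall := f_I fa hwN hv hcr.
  by move: y12; rewrite (hall _ h1 e1) (hall _ h2 e2) eqxx.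
have : #|forb e r n rk phi w| < maxdeg e + 2.
  rewrite /forb CS0 imset0 setU0 cardsU1.
  apply: (leq_ltn_trans (leq_add (leq_b1 _) (leq_imset_card _ _))).
  rewrite add1n addn2 ltnS ltnS; apply: leq_trans (deg_le e w).
  by apply: subset_leq_card; apply/subsetP=> y; rewrite !inE sy => /andP [].
case/pick_color => c hc.
exists (ext rk w n), (fun x => if x == w then c else phi x); split.
  by apply: ext_basic b hwN _ hc; exists y1.
exact: (fancy_np sg g b fa hwN na y12 h1 h2 e1 e2).
Qed.

Lemma step_p (T : finType) (e : rel T) r n rk (phi : T -> 'I_(maxdeg e + 2)) w u0 :
  simple_graph e -> girth_ge e 5 -> Basic e r n rk phi -> Fancy e n rk ->
  rk w = #|T| -> rk u0 < n -> e u0 w ->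
  (forall y, rk y < n -> e y w -> y = u0) ->
  (active e n rk u0 \/
    ((forall u, ~ active e n rk u) /\
     (forall z y1 y2, rk z = #|T| -> rk y1 < n -> rk y2 < n -> e y1 z -> e y2 z -> y1 = y2))) ->
  exists rk' (phi' : T -> 'I_(maxdeg e + 2)),
    Basic e r n.+1 rk' phi' /\ Fancy e n.+1 rk'.
Proof.
move=> sg g b fa hwN hu0 eu0 hall hcase.
have [sy ir] := sg.
have hnN := basic_lt b hwN.
have hw : n <= rk w by rewrite hwN ltnW.
have sub : forb e r n rk phi w \subset
    phi r |: (phi u0 |: [set phi v | v in [set v | e u0 v] :\ w]).
  apply/subsetP => c; rewrite /forb !inE => /orP [/orP [->//|]|].
    case/imsetP=> y; rewrite inE => /andP [hy ey] ->.
    by rewrite (hall y hy ey) eqxx orbT.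
  case/imsetP=> v; rewrite inE => /andP [hv /existsP [u hcr]] ->.
  case/and3P: hcr => /and3P [huv euv _] euw _.
  have uu0 := hall u (ltn_trans huv hv) euw; rewrite uu0 in euv.
  apply/orP; right; apply/orP; right; apply/imsetP; exists v => //.
  rewrite !inE euv andbT; apply/eqP=> vw; move: hv; rewrite vw hwN ltnNge.
  by rewrite (basic_le b).
have : #|forb e r n rk phi w| < maxdeg e + 2.
  apply: leq_ltn_trans (subset_leq_card sub) _.
  rewrite cardsU1; apply: (leq_ltn_trans (leq_add (leq_b1 _) (leqnn _))).
  rewrite cardsU1; apply: (leq_ltn_trans (leq_add (leqnn _) (leq_add (leq_b1 _) (leq_imset_card _ _)))).
  have := cardsD1 w [set v | e u0 v]; rewrite inE eu0 add1n => hd.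
  have := deg_le e u0; rewrite /deg hd => hd'.
  by rewrite addnC addn2 !ltnS addnC add1n.
case/pick_color => c hc.
exists (ext rk w n), (fun x => if x == w then c else phi x); split.
  by apply: ext_basic b hwN _ hc; exists u0.
exact: (fancy_p sg g b fa hwN hu0 eu0 hall hcase).
Qed.

From Stdlib Require Import Classical.

Lemma conn_edge (T : finType) (e : rel T) r n rk k (phi : T -> 'I_k) z :
  simple_graph e -> connected e -> Basic e r n rk phi -> rk z = #|T| ->
  exists u w, [/\ rk u < n, rk w = #|T| & e u w].
Proof.
move=> [sy ir] co b hz.
have hnN := basic_lt b hz.
apply: NNPP => hne.
have cl : closed e [pred x | rk x < n].
  move=> x y exy; rewrite !inE.
  case: (b_range b x) => hx; case: (b_range b y) => hy.
  - by rewrite hx hy.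
  - by exfalso; apply: hne; exists x, y.
  - by exfalso; apply: hne; exists y, x; rewrite sy.
  - by rewrite hx hy.
have := closed_connect cl (co r z); rewrite !inE (b_root b) hz.
by rewrite ltnNge (ltnW hnN).
Qed.

Lemma step (T : finType) (e : rel T) r n rk (phi : T -> 'I_(maxdeg e + 2)) z :
  simple_graph e -> connected e -> girth_ge e 5 ->
  Basic e r n rk phi -> Fancy e n rk -> rk z = #|T| ->
  exists rk' (phi' : T -> 'I_(maxdeg e + 2)),
    Basic e r n.+1 rk' phi' /\ Fancy e n.+1 rk'.
Proof.
move=> sg co g b fa hz.
case: (classic (exists u, active e n rk u)) => [[u au]|na].
  have [hu [_ [w [hw euw]]]] := au.
  apply: (step_p sg g b fa hw hu euw) => //; last by left.
  by move=> y hy eyw; apply: (f_K2 fa au hw euw hy eyw).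
have na' : forall u, ~ active e n rk u by move=> u au; apply: na; exists u.
case: (classic (exists w y1 y2, [/\ rk w = #|T|, y1 != y2, rk y1 < n & rk y2 < n]
                     /\ e y1 w /\ e y2 w)) => [[w [y1 [y2 [[hw y12 h1 h2] [e1 e2]]]]]|nd].
  exact: (step_np sg g b fa hw na' y12 h1 h2 e1 e2).
have nd' : forall z y1 y2, rk z = #|T| -> rk y1 < n -> rk y2 < n -> e y1 z -> e y2 z -> y1 = y2.
  move=> z' y1 y2 hz' h1 h2 e1 e2; case: (eqVneq y1 y2) => // y12.
  by exfalso; apply: nd; exists z', y1, y2.
have [u [w [hu hw euw]]] := conn_edge sg co b hz.
apply: (step_p sg g b fa hw hu euw) => //.
  by move=> y hy eyw; apply: (nd' w y u).
by right.
Qed.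

From mathcomp Require Import zify.

Lemma iterate (T : finType) (e : rel T) r :
  simple_graph e -> connected e -> girth_ge e 5 ->
  forall d n rk (phi : T -> 'I_(maxdeg e + 2)), #|T| - n <= d ->
  Basic e r n rk phi -> Fancy e n rk ->
  exists n' rk' (phi' : T -> 'I_(maxdeg e + 2)),
    Basic e r n' rk' phi' /\ (forall x, rk' x < n').
Proof.
move=> sg co g; elim=> [|d IH] n rk phi hd b fa.
  case: (classic (exists z, rk z = #|T|)) => [[z hz]|nz].
    by have := basic_lt b hz; lia.
  exists n, rk, phi; split => // x; case: (b_range b x) => // h.
  by exfalso; apply: nz; exists x.
case: (classic (exists z, rk z = #|T|)) => [[z hz]|nz].
  have hl := basic_lt b hz.
  have [rk' [phi' [b' fa']]] := step sg co g b fa hz.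
  by apply: (IH n.+1 rk' phi') => //; lia.
exists n, rk, phi; split => // x; case: (b_range b x) => // h.
by exfalso; apply: nz; exists x.
Qed.

Unset Implicit Arguments.
Theorem proposition3 (T : finType) (e : rel T) :
  simple_graph e -> connected e -> girth_ge e 5 ->
  chiD_le e (maxdeg e + 2).
Proof.
move=> sg co g.
have c0lt : 0 < maxdeg e + 2 by rewrite addn2.
pose c0 := Ordinal c0lt.
case: (pickP (fun _ : T => true)) => [r _|h]; last first.
  exists (fun _ => c0); split; first by move=> x; have := h x.
  by move=> f _ _; apply/permP => x; have := h x.
have hN : 0 < #|T| by apply/card_gt0P; exists r.
pose rk0 := fun x => if x == r then 0 else #|T|.
have rk0r : rk0 r = 0 by rewrite /rk0 eqxx.
have in0 : forall x, rk0 x < 1 -> x = r.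
  move=> x; rewrite /rk0; case: (eqVneq x r) => // _; by rewrite ltnNge hN.
have b0 : Basic e r 1 rk0 (fun _ => c0).
  split.
  - by rewrite rk0r.
  - move=> x; rewrite /rk0; case: (x == r); by [left | right].
  - have -> : [set x | rk0 x < 1] = [set r].
      apply/setP=> x; rewrite !inE; apply/idP/idP; first by move/in0 ->.
      by move/eqP ->; rewrite rk0r.
    by rewrite cards1.
  - by move=> x y /in0 -> ; rewrite rk0r => /esym h; apply/esym/in0; rewrite h.
  - by move=> x /in0 ->; rewrite eqxx.
  - by move=> x y /in0 ->; rewrite rk0r.
  - by move=> x /in0 ->; rewrite eqxx.
  - by move=> w v u /in0 ->; rewrite rk0r.
have f0 : Fancy e 1 rk0.
  have np : forall u v, rk0 v < 1 -> ~~ ppb e rk0 u v.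
    by move=> u v /in0 ->; rewrite /ppb rk0r.
  have na : forall u, ~ active e 1 rk0 u.
    by move=> u [_ [[v [hv pv]] _]]; move: (np u v hv); rewrite pv.
  split.
  - move=> z v u _ hv /and3P [pv _ _]; by move: (np u v hv); rewrite pv.
  - by move=> u1 u2 /na.
  - by move=> u z /na.
have [n [rk [phi [b hall]]]] := iterate sg co g (d := #|T|) (leq_subr _ _) b0 f0.
exists phi; split.
  move=> x y exy; have [sy ir] := sg.
  have xy : x != y by apply/eqP=> h; move: exy; rewrite h ir.
  have hinj : rk x != rk y by apply/eqP => /(b_inj b (hall x)) h; move: xy; rewrite h eqxx.
  case: (ltngtP (rk x) (rk y)) => h; last by move: hinj; rewrite h eqxx.
    by apply: (b_P b (hall y) h exy).
  by rewrite eq_sym; apply: (b_P b (hall x) h); rewrite sy.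
apply: (dist_from_rank (r := r) (rk := rk)) => //.
- by move=> x y; apply: (b_inj b (hall x)).
- by move=> x; apply: (b_A b (hall x)).
- by move=> x; apply: (b_R b (hall x)).
- by move=> w v u; apply: (b_C b (hall w)).
Qed.
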